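(* Under the standing assumptions for the $M=1$ system (see context) with $\nu_0=0$ and $\nu_1=\nu$, assume also $x_0(s)\ne0$ for $s>0$ and $s^{-\nu}y_1(s)/x_0(s)\to1$ as $s\to0^+$. Then $$s x_0'=-\eta_0x_0+s^{-\nu}y_0,\quad s y_0'=-(2\xi_0+s)s^{\nu}x_0+\eta_0y_0,\quad \eta_0'=s^{\nu}x_0^2,\quad \xi_0'=x_0y_0,$$ and moreover $$s^{\nu+1}x_0^2=2\xi_0+\eta_0-\eta_0(\eta_0-\nu),\qquad -s^{-\nu}y_0^2-(2\xi_0+s)s^{\nu}x_0^2+(2\eta_0-\nu)x_0y_0+\eta_0=0.$$
   Context: Fix complex parameters $\nu_0,\nu_1$ and put $e_1=\nu_0+\nu_1$, $e_2=\nu_0\nu_1$. Let $x_0,x_1,y_0,y_1,\xi_0,\xi_1,\eta_0,\eta_1$ be smooth complex-valued functions of $s\in(0,\infty)$ satisfying, with $'=d/ds$, the system $s x_0'=-\eta_0x_0-x_1$, $s x_1'=-\eta_1x_0+sx_0+\xi_0x_0+\xi_1x_1$, $s y_1'=-\xi_1y_1+y_0$, $s y_0'=-\xi_0y_1-sy_1+\eta_0y_0+\eta_1y_1$, $\xi_0'=x_0y_0$, $\xi_1'=x_0y_1$, $\eta_0'=x_0y_1$, $\eta_1'=x_1y_1$, together with the boundary behaviour as $s\to0^+$: $\xi_0\to e_2$, $\xi_1\to-e_1$, $\eta_0\to0$, $\eta_1\to0$, and $x_j(s)y_k(s)\to0$ for all $j,k\in\{0,1\}$. *)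

(* Defs.v *)
From Stdlib Require Import Reals.
Open Scope R_scope.

Definition CC : Type := (R * R)%type.
Definition Re (z : CC) : R := fst z.
Definition Im (z : CC) : R := snd z.
Definition RtoC (r : R) : CC := (r, 0).
Definition Czero : CC := (0, 0).
Definition Cone : CC := (1, 0).
Definition Cadd (z w : CC) : CC := (Re z + Re w, Im z + Im w).
Definition Copp (z : CC) : CC := (- Re z, - Im z).
Definition Csub (z w : CC) : CC := Cadd z (Copp w).
Definition Cmul (z w : CC) : CC :=
  (Re z * Re w - Im z * Im w, Re z * Im w + Im z * Re w).
Definition Cinv (z : CC) : CC :=
  (Re z / (Re z ^ 2 + Im z ^ 2), - Im z / (Re z ^ 2 + Im z ^ 2)).
Definition Cdiv (z w : CC) : CC := Cmul z (Cinv w).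
Definition Cnorm (z : CC) : R := sqrt (Re z ^ 2 + Im z ^ 2).

(* principal power s^nu = exp(nu * ln s) for real s > 0 and complex nu *)
Definition Cpow (s : R) (nu : CC) : CC :=
  (exp (Re nu * ln s) * cos (Im nu * ln s),
   exp (Re nu * ln s) * sin (Im nu * ln s)).

Definition Cderiv (f : R -> CC) (s : R) (d : CC) : Prop :=
  derivable_pt_lim (fun t => Re (f t)) s (Re d) /\
  derivable_pt_lim (fun t => Im (f t)) s (Im d).

Definition sDeriv_eq (f : R -> CC) (s : R) (rhs : CC) : Prop :=
  exists d : CC, Cderiv f s d /\ Cmul (RtoC s) d = rhs.

Definition Deriv_eq (f : R -> CC) (s : R) (rhs : CC) : Prop :=
  exists d : CC, Cderiv f s d /\ d = rhs.

Definition smooth_pos_R (f : R -> R) : Prop :=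
  exists D : nat -> R -> R,
    (forall s, 0 < s -> D O s = f s) /\
    (forall n s, 0 < s -> derivable_pt_lim (D n) s (D (S n) s)).

Definition smooth_pos (f : R -> CC) : Prop :=
  smooth_pos_R (fun t => Re (f t)) /\ smooth_pos_R (fun t => Im (f t)).

Definition lim0plus (f : R -> CC) (L : CC) : Prop :=
  forall eps : R, 0 < eps -> exists delta : R, 0 < delta /\
    forall s : R, 0 < s < delta -> Cnorm (Csub (f s) L) < eps.

Declare Scope C_scope.
Delimit Scope C_scope with C.
Infix "+" := Cadd : C_scope.
Infix "-" := Csub : C_scope.
Infix "*" := Cmul : C_scope.
Infix "/" := Cdiv : C_scope.
Notation "- z" := (Copp z) : C_scope.

(* Main.v *)
Require Import Defs.
From Stdlib Require Import Reals Lra Field.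
Open Scope R_scope.

Lemma Ceq (a b c d : R) : a = c -> b = d -> (a, b) = (c, d).
Proof. intros; subst; reflexivity. Qed.

Ltac Csolve := repeat match goal with z : CC |- _ => destruct z end;
  unfold Csub, Cadd, Cmul, Copp, Czero, Cone, Re, Im; simpl; apply Ceq; ring.

Lemma CRth : ring_theory Czero Cone Cadd Cmul Csub Copp (@eq CC).
Proof. constructor; intros; Csolve. Qed.

Lemma Cinv_l (z : CC) : z <> Czero -> Cmul (Cinv z) z = Cone.
Proof.
  destruct z as [a b]; intro H; unfold Cinv, Cmul, Cone, Re, Im; simpl.
  assert (a ^ 2 + b ^ 2 <> 0).
  { intro E. apply H. unfold Czero.
    assert (a = 0) by nra. assert (b = 0) by nra. subst; reflexivity. }
  apply Ceq; field; simpl in *; rewrite !Rmult_1_r in *; auto.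
Qed.

Lemma CFth : field_theory Czero Cone Cadd Cmul Csub Copp Cdiv Cinv (@eq CC).
Proof.
  constructor.
  - exact CRth.
  - unfold Czero, Cone; intro E; inversion E; lra.
  - reflexivity.
  - exact Cinv_l.
Qed.

Add Field CField : CFth.


Lemma dpl_eq (f g : R -> R) s l l' : (forall t, g t = f t) -> l = l' ->
  derivable_pt_lim f s l -> derivable_pt_lim g s l'.
Proof.
  intros H E D eps Heps. destruct (D eps Heps) as [d Hd]. exists d.
  intros h Hh Hd'. rewrite !H, <- E. apply Hd; auto.
Qed.

Lemma Cderiv_add f g s df dg : Cderiv f s df -> Cderiv g s dg ->
  Cderiv (fun t => Cadd (f t) (g t)) s (Cadd df dg).
Proof.
  intros [H1 H2] [H3 H4]; split.
  - eapply dpl_eq; [| | apply (derivable_pt_lim_plus _ _ _ _ _ H1 H3)];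
      intros; reflexivity.
  - eapply dpl_eq; [| | apply (derivable_pt_lim_plus _ _ _ _ _ H2 H4)];
      intros; reflexivity.
Qed.

Lemma Cderiv_opp f s df : Cderiv f s df ->
  Cderiv (fun t => Copp (f t)) s (Copp df).
Proof.
  intros [H1 H2]; split.
  - eapply dpl_eq; [| | apply (derivable_pt_lim_opp _ _ _ H1)];
      intros; reflexivity.
  - eapply dpl_eq; [| | apply (derivable_pt_lim_opp _ _ _ H2)];
      intros; reflexivity.
Qed.

Lemma Cderiv_sub f g s df dg : Cderiv f s df -> Cderiv g s dg ->
  Cderiv (fun t => Csub (f t) (g t)) s (Csub df dg).
Proof. intros; apply Cderiv_add; auto; apply Cderiv_opp; auto. Qed.

Lemma Cderiv_mul f g s df dg : Cderiv f s df -> Cderiv g s dg ->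
  Cderiv (fun t => Cmul (f t) (g t)) s (Cadd (Cmul df (g s)) (Cmul (f s) dg)).
Proof.
  intros [H1 H2] [H3 H4]; split.
  - eapply dpl_eq; [| | apply (derivable_pt_lim_minus _ _ _ _ _
        (derivable_pt_lim_mult _ _ _ _ _ H1 H3) (derivable_pt_lim_mult _ _ _ _ _ H2 H4))].
    + intros; reflexivity.
    + unfold Cadd, Cmul, Re, Im; simpl; ring.
  - eapply dpl_eq; [| | apply (derivable_pt_lim_plus _ _ _ _ _
        (derivable_pt_lim_mult _ _ _ _ _ H1 H4) (derivable_pt_lim_mult _ _ _ _ _ H2 H3))].
    + intros; reflexivity.
    + unfold Cadd, Cmul, Re, Im; simpl; ring.
Qed.

Lemma Cderiv_const (c : CC) s : Cderiv (fun _ => c) s Czero.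
Proof. split; apply (derivable_pt_lim_const). Qed.

Lemma Cderiv_id s : Cderiv (fun t => RtoC t) s Cone.
Proof. split; [apply derivable_pt_lim_id | apply derivable_pt_lim_const]. Qed.

Lemma Cderiv_inv f s df : f s <> Czero -> Cderiv f s df ->
  Cderiv (fun t => Cinv (f t)) s (Copp (Cmul df (Cmul (Cinv (f s)) (Cinv (f s))))).
Proof.
  intros Hn [H1 H2].
  assert (Hq : forall t, (Re (f t) ^ 2 + Im (f t) ^ 2) = (fun t => Re (f t) * Re (f t) + Im (f t) * Im (f t)) t)
    by (intros; simpl; ring).
  assert (HD : derivable_pt_lim (fun t => Re (f t) * Re (f t) + Im (f t) * Im (f t)) s
     ((Re df * Re (f s) + Re (f s) * Re df) + (Im df * Im (f s) + Im (f s) * Im df))).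
  { apply (derivable_pt_lim_plus _ _ _ _ _ (derivable_pt_lim_mult _ _ _ _ _ H1 H1)
          (derivable_pt_lim_mult _ _ _ _ _ H2 H2)). }
  destruct (f s) as [a b] eqn:Ef.
  assert (Hab : a * a + b * b <> 0).
  { intro E. apply Hn. unfold Czero.
    assert (a = 0) by nra. assert (b = 0) by nra. subst; reflexivity. }
  simpl in HD.
  split.
  - eapply dpl_eq; [| | apply (derivable_pt_lim_div _ _ _ _ _ H1 HD)].
    + intros; unfold Cinv; simpl. unfold Rdiv, div_fct. rewrite !Rmult_1_r; reflexivity.
    + rewrite Ef. unfold Cinv, Copp, Cmul, Re, Im, Rsqr; simpl. field. auto.
    + rewrite Ef. simpl. auto.
  - eapply dpl_eq; [| | apply (derivable_pt_lim_div _ _ _ _ _ (derivable_pt_lim_opp _ _ _ H2) HD)].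
    + intros; unfold Cinv; simpl. unfold Rdiv, div_fct. rewrite !Rmult_1_r; reflexivity.
    + unfold opp_fct; simpl; rewrite Ef. unfold Cinv, Copp, Cmul, Re, Im, Rsqr; simpl. field. auto.
    + rewrite Ef. simpl. auto.
Qed.

Lemma Cpow_add s a b : Cpow s (Cadd a b) = Cmul (Cpow s a) (Cpow s b).
Proof.
  destruct a as [ar ai]; destruct b as [br bi].
  unfold Cpow, Cadd, Cmul, Re, Im; simpl. apply Ceq.
  - rewrite Rmult_plus_distr_r, exp_plus, (Rmult_plus_distr_r ai), cos_plus. ring.
  - rewrite Rmult_plus_distr_r, exp_plus, (Rmult_plus_distr_r ai), sin_plus. ring.
Qed.

Lemma Cpow_zero s : Cpow s Czero = Cone.
Proof.
  unfold Cpow, Czero, Cone, Re, Im; simpl. rewrite !Rmult_0_l, exp_0, cos_0, sin_0.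
  apply Ceq; ring.
Qed.

Lemma Cpow_one s : 0 < s -> Cpow s Cone = RtoC s.
Proof.
  intros. unfold Cpow, Cone, RtoC, Re, Im; simpl. rewrite !Rmult_0_l, Rmult_1_l, exp_ln, cos_0, sin_0 by auto.
  apply Ceq; ring.
Qed.

Lemma Cpow_opp s a : Cmul (Cpow s a) (Cpow s (Copp a)) = Cone.
Proof.
  rewrite <- Cpow_add.
  replace (Cadd a (Copp a)) with Czero by (destruct a; unfold Cadd, Copp, Czero, Re, Im; simpl; apply Ceq; ring).
  apply Cpow_zero.
Qed.

Lemma Cpow_nz s a : Cpow s a <> Czero.
Proof.
  intro E. assert (H := Cpow_opp s a). rewrite E in H.
  unfold Cmul, Czero, Cone, Re, Im in H; simpl in H. inversion H. lra.
Qed.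

Lemma RtoC_nz s : s <> 0 -> RtoC s <> Czero.
Proof. intros H E; inversion E; auto. Qed.

Lemma Cderiv_pow a s : 0 < s ->
  Cderiv (fun t => Cpow t a) s (Cmul (Cmul a (Cpow s a)) (Cinv (RtoC s))).
Proof.
  intros Hs. destruct a as [ar ai].
  assert (Hl : forall c, derivable_pt_lim (fun t => c * ln t) s (c * / s)).
  { intro c. apply (derivable_pt_lim_scal ln c s _ (derivable_pt_lim_ln s Hs)). }
  assert (HE := derivable_pt_lim_comp _ exp s _ _ (Hl ar) (derivable_pt_lim_exp _)).
  assert (HC := derivable_pt_lim_comp _ cos s _ _ (Hl ai) (derivable_pt_lim_cos _)).
  assert (HS := derivable_pt_lim_comp _ sin s _ _ (Hl ai) (derivable_pt_lim_sin _)).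
  split.
  - eapply dpl_eq; [| | apply (derivable_pt_lim_mult _ _ _ _ _ HE HC)].
    + intros; reflexivity.
    + unfold Cpow, Cmul, Cinv, RtoC, Re, Im, comp; simpl. field. lra.
  - eapply dpl_eq; [| | apply (derivable_pt_lim_mult _ _ _ _ _ HE HS)].
    + intros; reflexivity.
    + unfold Cpow, Cmul, Cinv, RtoC, Re, Im, comp; simpl. field. lra.
Qed.

Definition RL (g : R -> R) (l : R) := limit1_in g (fun x => 0 < x) l 0.

Lemma norm_ge x y : Rabs x <= sqrt (x ^ 2 + y ^ 2).
Proof.
  rewrite <- sqrt_Rsqr_abs. apply sqrt_le_1_alt. unfold Rsqr. nra.
Qed.

Lemma norm_le x y : sqrt (x ^ 2 + y ^ 2) <= Rabs x + Rabs y.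
Proof.
  rewrite <- (sqrt_Rsqr (Rabs x + Rabs y)) by (pose proof (Rabs_pos x); pose proof (Rabs_pos y); lra).
  apply sqrt_le_1_alt. unfold Rsqr.
  pose proof (Rabs_pos x); pose proof (Rabs_pos y).
  replace (x ^ 2) with (Rabs x * Rabs x) by (rewrite <- Rabs_mult; simpl; rewrite Rmult_1_r; apply Rabs_right; nra).
  replace (y ^ 2) with (Rabs y * Rabs y) by (rewrite <- Rabs_mult; simpl; rewrite Rmult_1_r; apply Rabs_right; nra).
  nra.
Qed.

Lemma lim_split f L : lim0plus f L <-> RL (fun t => Re (f t)) (Re L) /\ RL (fun t => Im (f t)) (Im L).
Proof.
  unfold lim0plus, RL, limit1_in, limit_in; simpl; unfold Rdist, Cnorm, Csub, Cadd, Copp, Re, Im; simpl.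
  split.
  - intros H; split; intros eps Heps; destruct (H eps Heps) as [d [Hd Hd']]; exists d; split; auto;
      intros x [Hx Hx']; rewrite Rminus_0_r in Hx'; rewrite Rabs_right in Hx' by lra;
      specialize (Hd' x ltac:(lra)).
    + eapply Rle_lt_trans; [apply norm_ge | exact Hd'].
    + eapply Rle_lt_trans; [| exact Hd']. rewrite Rplus_comm. apply norm_ge.
  - intros [H1 H2] eps Heps.
    destruct (H1 (eps/2) ltac:(lra)) as [d1 [Hd1 Hd1']].
    destruct (H2 (eps/2) ltac:(lra)) as [d2 [Hd2 Hd2']].
    exists (Rmin d1 d2); split; [apply Rmin_pos; auto|].
    intros s Hs.
    assert (s < d1) by (eapply Rlt_le_trans; [apply Hs | apply Rmin_l]).
    assert (s < d2) by (eapply Rlt_le_trans; [apply Hs | apply Rmin_r]).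
    assert (A1 := Hd1' s). assert (A2 := Hd2' s).
    rewrite Rminus_0_r, Rabs_right in A1, A2 by lra.
    specialize (A1 (conj (proj1 Hs) H)). specialize (A2 (conj (proj1 Hs) H0)).
    eapply Rle_lt_trans; [apply norm_le | unfold Rminus in *; lra].
Qed.

Lemma lim_ext f g L : (forall t, 0 < t -> f t = g t) -> lim0plus f L -> lim0plus g L.
Proof.
  intros E H eps Heps. destruct (H eps Heps) as [d [Hd Hd']]. exists d; split; auto.
  intros s Hs. rewrite <- E by lra. auto.
Qed.

Lemma RL_const c : RL (fun _ => c) c.
Proof. intros eps He; exists 1; split; [lra|]; intros; simpl; unfold Rdist; rewrite Rminus_diag, Rabs_R0; lra. Qed.

Lemma lim_const c : lim0plus (fun _ => c) c.
Proof. apply lim_split; split; apply RL_const. Qed.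

Lemma lim_id : lim0plus (fun t => RtoC t) Czero.
Proof.
  apply lim_split; split; simpl.
  - intros eps Heps; exists eps; split; auto. intros x [Hx Hx']. simpl in *. auto.
  - apply RL_const.
Qed.

Lemma lim_add f g a b : lim0plus f a -> lim0plus g b ->
  lim0plus (fun t => Cadd (f t) (g t)) (Cadd a b).
Proof.
  rewrite !lim_split; intros [H1 H2] [H3 H4]; split; simpl.
  - apply (limit_plus _ _ _ _ _ _ H1 H3).
  - apply (limit_plus _ _ _ _ _ _ H2 H4).
Qed.

Lemma lim_opp f a : lim0plus f a -> lim0plus (fun t => Copp (f t)) (Copp a).
Proof.
  rewrite !lim_split; intros [H1 H2]; split; simpl.
  - apply (limit_Ropp _ _ _ _ H1).
  - apply (limit_Ropp _ _ _ _ H2).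
Qed.

Lemma lim_sub f g a b : lim0plus f a -> lim0plus g b ->
  lim0plus (fun t => Csub (f t) (g t)) (Csub a b).
Proof. intros; apply lim_add; auto; apply lim_opp; auto. Qed.

Lemma lim_mul f g a b : lim0plus f a -> lim0plus g b ->
  lim0plus (fun t => Cmul (f t) (g t)) (Cmul a b).
Proof.
  rewrite !lim_split; intros [H1 H2] [H3 H4]; split; simpl.
  - apply (limit_minus _ _ _ _ _ _ (limit_mul _ _ _ _ _ _ H1 H3) (limit_mul _ _ _ _ _ _ H2 H4)).
  - apply (limit_plus _ _ _ _ _ _ (limit_mul _ _ _ _ _ _ H1 H4) (limit_mul _ _ _ _ _ _ H2 H3)).
Qed.

Lemma Rconst g l : (forall s, 0 < s -> derivable_pt_lim g s 0) -> RL g l ->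
  forall s, 0 < s -> g s = l.
Proof.
  intros D L s Hs.
  assert (Eq : forall t, 0 < t < s -> g t = g s).
  { intros t Ht. destruct (MVT_cor2 g (fun _ => 0) t s ltac:(lra)) as [c [Hc _]].
    - intros c Hc. apply D. lra.
    - lra. }
  destruct (Req_dec (g s) l) as [|Hne]; auto.
  exfalso. assert (Hp : 0 < Rabs (g s - l)) by (apply Rabs_pos_lt; lra).
  destruct (L _ Hp) as [d [Hd Hd']].
  set (t := Rmin s d / 2).
  assert (0 < Rmin s d) by (apply Rmin_pos; lra).
  assert (Rmin s d <= s) by apply Rmin_l. assert (Rmin s d <= d) by apply Rmin_r.
  specialize (Hd' t). simpl in Hd'. unfold Rdist in Hd'.
  rewrite Rminus_0_r, Rabs_right, Eq in Hd' by (unfold t; lra).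
  assert (Rabs (g s - l) < Rabs (g s - l)) by (apply Hd'; unfold t; lra). lra.
Qed.

Lemma Cconst f L : (forall s, 0 < s -> Cderiv f s Czero) -> lim0plus f L ->
  forall s, 0 < s -> f s = L.
Proof.
  intros D H s Hs. apply lim_split in H as [H1 H2].
  rewrite (surjective_pairing (f s)), (surjective_pairing L).
  f_equal.
  - apply (Rconst (fun t => Re (f t))); auto. intros; apply D; auto.
  - apply (Rconst (fun t => Im (f t))); auto. intros; apply D; auto.
Qed.

Lemma sD f s rhs : 0 < s -> sDeriv_eq f s rhs -> Cderiv f s (Cmul (Cinv (RtoC s)) rhs).
Proof.
  intros Hs [d [Hd E]]. replace (Cmul (Cinv (RtoC s)) rhs) with d; auto.
  rewrite <- E. field. apply RtoC_nz; lra.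
Qed.

Lemma dD f s rhs : Deriv_eq f s rhs -> Cderiv f s rhs.
Proof. intros [d [Hd E]]; subst; auto. Qed.

Lemma Cderiv_eqv f s d d' : Cderiv f s d -> d = d' -> Cderiv f s d'.
Proof. intros; subst; auto. Qed.

Lemma lim_eqv f L L' : lim0plus f L -> L = L' -> lim0plus f L'.
Proof. intros; subst; auto. Qed.

Lemma Cpow_opp' s a : Cpow s (Copp a) = Cinv (Cpow s a).
Proof.
  assert (H := Cpow_opp s a). assert (Hn := Cpow_nz s a).
  transitivity (Cmul (Cinv (Cpow s a)) (Cmul (Cpow s a) (Cpow s (Copp a)))).
  - field; auto.
  - rewrite H. ring.
Qed.

Lemma RtoC2 : RtoC 2 = Cadd Cone Cone.
Proof. unfold RtoC, Cadd, Cone, Re, Im; simpl; apply Ceq; ring. Qed.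

Ltac dtac := repeat first
  [ apply Cderiv_add | apply Cderiv_sub | apply Cderiv_mul | apply Cderiv_opp
  | apply Cderiv_const | apply Cderiv_id | eassumption ].

Theorem mainTheorem4
  (nu : CC)
  (x0 x1 y0 y1 xi0 xi1 eta0 eta1 : R -> CC)
  (* smoothness on (0, oo) *)
  (Hsm : smooth_pos x0 /\ smooth_pos x1 /\ smooth_pos y0 /\ smooth_pos y1 /\
         smooth_pos xi0 /\ smooth_pos xi1 /\ smooth_pos eta0 /\ smooth_pos eta1)
  (* the M = 1 system *)
  (Hx0 : forall s, 0 < s ->
     sDeriv_eq x0 s (- (eta0 s * x0 s) - x1 s)%C)
  (Hx1 : forall s, 0 < s ->
     sDeriv_eq x1 s (- (eta1 s * x0 s) + RtoC s * x0 s + xi0 s * x0 s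
                     + xi1 s * x1 s)%C)
  (Hy1 : forall s, 0 < s ->
     sDeriv_eq y1 s (- (xi1 s * y1 s) + y0 s)%C)
  (Hy0 : forall s, 0 < s ->
     sDeriv_eq y0 s (- (xi0 s * y1 s) - RtoC s * y1 s + eta0 s * y0 s
                     + eta1 s * y1 s)%C)
  (Hxi0 : forall s, 0 < s -> Deriv_eq xi0 s (x0 s * y0 s)%C)
  (Hxi1 : forall s, 0 < s -> Deriv_eq xi1 s (x0 s * y1 s)%C)
  (Heta0 : forall s, 0 < s -> Deriv_eq eta0 s (x0 s * y1 s)%C)
  (Heta1 : forall s, 0 < s -> Deriv_eq eta1 s (x1 s * y1 s)%C)
  (* boundary behaviour with nu0 = 0, nu1 = nu: e1 = nu, e2 = 0 *)
  (Bxi0 : lim0plus xi0 Czero)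
  (Bxi1 : lim0plus xi1 (Copp nu))
  (Beta0 : lim0plus eta0 Czero)
  (Beta1 : lim0plus eta1 Czero)
  (Bx0y0 : lim0plus (fun s => x0 s * y0 s)%C Czero)
  (Bx0y1 : lim0plus (fun s => x0 s * y1 s)%C Czero)
  (Bx1y0 : lim0plus (fun s => x1 s * y0 s)%C Czero)
  (Bx1y1 : lim0plus (fun s => x1 s * y1 s)%C Czero)
  (* additional assumptions *)
  (Hnz : forall s, 0 < s -> x0 s <> Czero)
  (Hratio : lim0plus (fun s => Cpow s (Copp nu) * y1 s / x0 s)%C Cone) :
  (forall s, 0 < s ->
     sDeriv_eq x0 s (- (eta0 s * x0 s) + Cpow s (Copp nu) * y0 s)%C /\
     sDeriv_eq y0 s (- ((RtoC 2 * xi0 s + RtoC s) * Cpow s nu * x0 s)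
                     + eta0 s * y0 s)%C /\
     Deriv_eq eta0 s (Cpow s nu * (x0 s * x0 s))%C /\
     Deriv_eq xi0 s (x0 s * y0 s)%C) /\
  (forall s, 0 < s ->
     (Cpow s (nu + Cone) * (x0 s * x0 s))%C =
       (RtoC 2 * xi0 s + eta0 s - eta0 s * (eta0 s - nu))%C /\
     (- (Cpow s (Copp nu) * (y0 s * y0 s))
      - (RtoC 2 * xi0 s + RtoC s) * Cpow s nu * (x0 s * x0 s)
      + (RtoC 2 * eta0 s - nu) * (x0 s * y0 s) + eta0 s)%C = Czero).
Proof.
  clear Hsm.
  assert (Dx0 : forall s, 0 < s -> Cderiv x0 s _) by (intros; apply sD; auto).
  assert (Dx1 : forall s, 0 < s -> Cderiv x1 s _) by (intros; apply sD; auto).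
  assert (Dy0 : forall s, 0 < s -> Cderiv y0 s _) by (intros; apply sD; auto).
  assert (Dy1 : forall s, 0 < s -> Cderiv y1 s _) by (intros; apply sD; auto).
  assert (Dxi0 : forall s, 0 < s -> Cderiv xi0 s _) by (intros; apply dD; auto).
  assert (Dxi1 : forall s, 0 < s -> Cderiv xi1 s _) by (intros; apply dD; auto).
  assert (Deta0 : forall s, 0 < s -> Cderiv eta0 s _) by (intros; apply dD; auto).
  assert (Deta1 : forall s, 0 < s -> Cderiv eta1 s _) by (intros; apply dD; auto).
  assert (SN : forall s, 0 < s -> RtoC s <> Czero) by (intros; apply RtoC_nz; lra).
  assert (R1 : forall s, 0 < s -> Csub (xi1 s) (eta0 s) = Copp nu).
  { apply Cconst.
    - intros s Hs. eapply Cderiv_eqv. 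
      + apply Cderiv_sub; [apply Dxi1 | apply Deta0]; auto.
      + ring.
    - eapply lim_eqv; [apply lim_sub; eauto | ring]. }
  assert (RV : forall s, 0 < s -> Cadd (Cmul (x1 s) (y1 s)) (Cmul (x0 s) (y0 s)) = Czero).
  { apply Cconst.
    - intros s Hs. eapply Cderiv_eqv. 
      + apply Cderiv_add; apply Cderiv_mul; eauto.
      + ring.
    - eapply lim_eqv; [apply lim_add; eauto | ring]. }
  assert (RU : forall s, 0 < s ->
     Cmul (Cmul (Cpow s (Copp nu)) (y1 s)) (Cinv (x0 s)) = Cone).
  { apply Cconst.
    - intros s Hs. eapply Cderiv_eqv.
      + apply Cderiv_mul; [apply Cderiv_mul; [apply Cderiv_pow; auto | apply Dy1; auto]
                          | apply Cderiv_inv; [apply Hnz; auto | apply Dx0; auto]].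
      + assert (Hx := Hnz s Hs). assert (HS := SN s Hs).
        replace (xi1 s) with (Csub (eta0 s) nu)
          by (transitivity (Cadd (eta0 s) (Csub (xi1 s) (eta0 s))); [rewrite R1 by auto; ring | ring]).
        transitivity (Cmul (Cmul (Cmul (Cinv (RtoC s)) (Cpow s (Copp nu))) (Cmul (Cinv (x0 s)) (Cinv (x0 s))))
                        (Cadd (Cmul (x1 s) (y1 s)) (Cmul (x0 s) (y0 s)))).
        * field. auto.
        * rewrite RV by auto. ring.
    - exact Hratio. }
  assert (Xi1 : forall s, 0 < s -> xi1 s = Csub (eta0 s) nu).
  { intros s Hs. transitivity (Cadd (eta0 s) (Csub (xi1 s) (eta0 s))); [ring | rewrite R1 by auto; ring]. }
  assert (Y1 : forall s, 0 < s -> y1 s = Cmul (Cpow s nu) (x0 s)).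
  { intros s Hs. assert (Hx := Hnz s Hs). assert (HA := Cpow_nz s nu).
    assert (H := RU s Hs). rewrite Cpow_opp' in H.
    transitivity (Cmul (Cmul (Cpow s nu) (x0 s)) (Cmul (Cmul (Cinv (Cpow s nu)) (y1 s)) (Cinv (x0 s)))).
    - field; auto.
    - rewrite H; ring. }
  assert (X1 : forall s, 0 < s -> x1 s = Copp (Cmul (Cinv (Cpow s nu)) (y0 s))).
  { intros s Hs. assert (Hx := Hnz s Hs). assert (HA := Cpow_nz s nu).
    assert (H := RV s Hs). rewrite Y1 in H by auto.
    transitivity (Csub (Cmul (Cmul (Cinv (Cpow s nu)) (Cinv (x0 s)))
                    (Cadd (Cmul (x1 s) (Cmul (Cpow s nu) (x0 s))) (Cmul (x0 s) (y0 s))))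
                  (Cmul (Cinv (Cpow s nu)) (y0 s))).
    - field; auto.
    - rewrite H; ring. }
  assert (E1 : forall s, 0 < s -> Cadd (eta1 s) (xi0 s) = Czero).
  { apply Cconst.
    - intros s Hs. eapply Cderiv_eqv.
      + apply Cderiv_add; [apply Deta1 | apply Dxi0]; auto.
      + apply RV; auto.
    - eapply lim_eqv; [apply lim_add; eauto | ring]. }
  assert (Eta1 : forall s, 0 < s -> eta1 s = Copp (xi0 s)).
  { intros s Hs. transitivity (Csub (Cadd (eta1 s) (xi0 s)) (xi0 s)); [ring | rewrite E1 by auto; ring]. }
  split.
  { intros s Hs. split; [|split; [|split]].
    - destruct (Hx0 s Hs) as [d [Hd E]]. exists d; split; auto.
      rewrite E, X1, Cpow_opp' by auto. ring.
    - destruct (Hy0 s Hs) as [d [Hd E]]. exists d; split; auto.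
      rewrite E, Eta1, Y1, RtoC2 by auto. ring.
    - destruct (Heta0 s Hs) as [d [Hd E]]. exists d; split; auto.
      rewrite E, Y1 by auto. ring.
    - auto. }
  assert (F0 : forall s, 0 < s ->
     Csub (Cmul (Cpow s (Cadd nu Cone)) (Cmul (x0 s) (x0 s)))
          (Csub (Cadd (Cmul (RtoC 2) (xi0 s)) (eta0 s)) (Cmul (eta0 s) (Csub (eta0 s) nu))) = Czero).
  { apply Cconst.
    - intros s Hs. eapply Cderiv_eqv.
      + repeat first [ apply Cderiv_sub | apply Cderiv_add | apply Cderiv_mul | apply Cderiv_opp
           | apply Cderiv_const | apply Cderiv_id | apply Cderiv_pow; assumption
           | apply Dx0; assumption | apply Dx1; assumption | apply Dy0; assumption
           | apply Dy1; assumption | apply Dxi0; assumption | apply Dxi1; assumption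
           | apply Deta0; assumption | apply Deta1; assumption ].
      + assert (Hx := Hnz s Hs). assert (HA := Cpow_nz s nu). assert (HS := SN s Hs).
        rewrite !Cpow_add; rewrite !Cpow_one, X1, Y1, RtoC2 by auto.
        field. auto.
    - eapply (lim_ext (fun t => Csub (Cmul (RtoC t) (Cmul (x0 t) (y1 t)))
          (Csub (Cadd (Cmul (RtoC 2) (xi0 t)) (eta0 t)) (Cmul (eta0 t) (Csub (eta0 t) nu))))).
      + intros t Ht. rewrite Cpow_add; rewrite Cpow_one, Y1 by auto. ring.
      + eapply lim_eqv.
        * repeat first [ eassumption | apply lim_sub | apply lim_add | apply lim_mul | apply lim_opp
                       | apply lim_id | apply lim_const ].
        * ring. }
  assert (E0 : forall s, 0 < s ->
     Cadd (Cadd (Csub (Copp (Cmul (Cpow s (Copp nu)) (Cmul (y0 s) (y0 s))))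
        (Cmul (Cmul (Cadd (Cmul (RtoC 2) (xi0 s)) (RtoC s)) (Cpow s nu)) (Cmul (x0 s) (x0 s))))
        (Cmul (Csub (Cmul (RtoC 2) (eta0 s)) nu) (Cmul (x0 s) (y0 s)))) (eta0 s) = Czero).
  { apply Cconst.
    - intros s Hs. eapply Cderiv_eqv.
      + repeat first [ apply Cderiv_sub | apply Cderiv_add | apply Cderiv_mul | apply Cderiv_opp
           | apply Cderiv_const | apply Cderiv_id | apply Cderiv_pow; assumption
           | apply Dx0; assumption | apply Dx1; assumption | apply Dy0; assumption
           | apply Dy1; assumption | apply Dxi0; assumption | apply Dxi1; assumption
           | apply Deta0; assumption | apply Deta1; assumption ].
      + assert (Hx := Hnz s Hs). assert (HA := Cpow_nz s nu). assert (HS := SN s Hs).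
        rewrite !Cpow_opp'; rewrite X1, Y1, Eta1, RtoC2 by auto.
        field. auto.
    - eapply (lim_ext (fun t => Cadd (Cadd (Csub (Cmul (x1 t) (y0 t))
          (Cmul (Cadd (Cmul (RtoC 2) (xi0 t)) (RtoC t)) (Cmul (x0 t) (y1 t))))
          (Cmul (Csub (Cmul (RtoC 2) (eta0 t)) nu) (Cmul (x0 t) (y0 t)))) (eta0 t))).
      + intros t Ht. assert (HA := Cpow_nz t nu).
        rewrite !Cpow_opp'; rewrite X1, Y1 by auto. field. auto.
      + eapply lim_eqv.
        * repeat first [ eassumption | apply lim_sub | apply lim_add | apply lim_mul | apply lim_opp
                       | apply lim_id | apply lim_const ].
        * ring. }
  intros s Hs. split.
  - transitivity (Cadd (Csub (Cmul (Cpow s (Cadd nu Cone)) (Cmul (x0 s) (x0 s)))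
          (Csub (Cadd (Cmul (RtoC 2) (xi0 s)) (eta0 s)) (Cmul (eta0 s) (Csub (eta0 s) nu))))
          (Csub (Cadd (Cmul (RtoC 2) (xi0 s)) (eta0 s)) (Cmul (eta0 s) (Csub (eta0 s) nu)))).
    + ring.
    + rewrite F0 by auto. ring.
  - apply E0; auto.
Qed.
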